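(* Consider the algorithm described in the context, suppose it does not terminate finitely, and suppose there is $\sigma_{\min}>0$ with $\sigma_{\min}(J_k)\ge\sigma_{\min}$ for all $k\in\mathbb{N}$. Then the Lagrange multiplier estimate sequence $\{y_k\}$ is bounded.
   Context: Problem: $\min_{x\in\mathbb{R}^n} f(x)+r(x)$ subject to $c(x)=0$, where $f:\mathbb{R}^n\to\mathbb{R}$ and $c:\mathbb{R}^n\to\mathbb{R}^m$ ($m\le n$) are continuously differentiable and $r:\mathbb{R}^n\to\mathbb{R}_{\ge 0}$ is convex. Write $g(x)=\nabla f(x)$, $J(x)=\nabla c(x)^T$, and $f_k=f(x_k)$, $g_k=g(x_k)$, $c_k=c(x_k)$, $J_k=J(x_k)$, $r_k=r(x_k)$. All norms are Euclidean. Merit function: $\Phi_\tau(x)=\tau(f(x)+r(x))+\|c(x)\|_2$. Algorithm: inputs $x_0$, $\alpha_0>0$, $\tau_{-1}>0$; constants $\kappa_v>0$, $\sigma_c,\epsilon_\tau,\xi,\eta\in(0,1)$, $\sigma_u\in(0,1/2]$, $\bar\sigma_u:=\sigma_u+\tfrac12$. For $k=0,1,\dots$: 1. If $J_k^Tc_k\ne0$, compute $v_k$ with $v_k\in\mathrm{Range}(J_k^T)$, $\|v_k\|_2\le\kappa_v\alpha_k\|J_k^Tc_k\|_2$, $\|c_k+J_kv_k\|_2\le\|c_k+J_kv_k^c\|_2$, where $v_k^c=-\beta_k^cJ_k^Tc_k$ with $\beta_k^c$ minimizing $\tfrac12\|c_k-\beta J_kJ_k^Tc_k\|_2^2$ over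 $0\le\beta\le\kappa_v\alpha_k$. Otherwise set $v_k=0$, and if $c_k\ne0$ terminate. 2. Let $u_k$ be the unique minimizer of $g_k^Tu+\tfrac1{2\alpha_k}\|u\|_2^2+r(x_k+v_k+u)$ subject to $J_ku=0$; set $s_k=v_k+u_k$. If $s_k=0$, terminate. By the optimality conditions there exist $g_{r,k}\in\partial r(x_k+s_k)$ and $y_k\in\mathbb{R}^m$ with $g_k+\tfrac1{\alpha_k}u_k+g_{r,k}-J_k^Ty_k=0$; $g_{r,k},y_k$ denote such vectors ($y_k$ is the Lagrange multiplier estimate). 3. Let $D_k:=g_k^Ts_k+\bar\sigma_u\|s_k\|_2^2/\alpha_k+r(x_k+s_k)-r_k$; $\tau_{k,\mathrm{trial}}=\infty$ if $D_k\le0$, else $\tau_{k,\mathrm{trial}}=(1-\sigma_c)(\|c_k\|_2-\|c_k+J_kv_k\|_2)/D_k$. Set $\tau_k=\tau_{k-1}$ if $\tau_{k-1}\le\tau_{k,\mathrm{trial}}$, else $\tau_k=\min\{(1-\epsilon_\tau)\tau_{k-1},\tau_{k,\mathrm{trial}}\}$. 4. With $\Delta q_k(s,\tau):=-\tau(g_k^Ts+\tfrac1{2\alpha_k}\|s\|_2^2+r(x_k+s)-r_k)+\|c_k\|_2-\|c_k+J_ks\|_2$: if $\Phi_{\tau_k}(x_k+s_k)\le\Phi_{\tau_k}(x_k)-\eta\Delta q_k(s_k,\tau_k)$ set $x_{k+1}=x_k+s_k$, $\alpha_{k+1}=\alpha_k$; else $x_{k+1}=x_k$, $\alpha_{k+1}=\xi\alpha_k$.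 Standing assumption: there is an open convex set $\mathcal X$ containing all iterates $x_k$ and trial points $x_k+s_k$ such that $f$ is bounded below on $\mathcal X$, $\nabla f$ is bounded and Lipschitz continuous on $\mathcal X$, $c$ is bounded on $\mathcal X$, $J$ is bounded and Lipschitz continuous on $\mathcal X$, and all subgradients of $r$ at points of $\mathcal X$ are uniformly bounded in norm. *)

(* Defs.v *)
From HB Require Import structures.
From mathcomp Require Import all_boot all_order all_algebra.
From mathcomp Require Import all_classical all_reals.
Set Implicit Arguments. Unset Strict Implicit. Unset Printing Implicit Defensive.
Import Order.TTheory GRing.Theory Num.Theory.
Local Open Scope ring_scope.

Section Defs.
Variable R : realType.

Definition enorm (p q : nat) (A : 'M[R]_(p, q)) : R :=
  Num.sqrt (\sum_(i < p) \sum_(j < q) A i j ^+ 2).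

Definition dotv (n : nat) (u w : 'cV[R]_n) : R := (u^T *m w) 0 0.

Definition subgrad (n : nat) (r : 'cV[R]_n -> R) (x gr : 'cV[R]_n) : Prop :=
  forall z, r x + dotv gr (z - x) <= r z.

Definition convex_fun (n : nat) (r : 'cV[R]_n -> R) : Prop :=
  forall x z (t : R), 0 <= t -> t <= 1 ->
    r (t *: x + (1 - t) *: z) <= t * r x + (1 - t) * r z.

Definition convex_set (n : nat) (X : 'cV[R]_n -> Prop) : Prop :=
  forall x z (t : R), X x -> X z -> 0 <= t -> t <= 1 -> X (t *: x + (1 - t) *: z).

Definition open_set (n : nat) (X : 'cV[R]_n -> Prop) : Prop :=
  forall x, X x -> exists e : R, 0 < e /\ forall z, enorm (z - x) < e -> X z.

Definition has_gradient (n : nat) (f : 'cV[R]_n -> R) (g : 'cV[R]_n -> 'cV[R]_n) : Prop :=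
  forall x (e : R), 0 < e -> exists d : R, 0 < d /\
    forall h, enorm h < d -> `|f (x + h) - f x - dotv (g x) h| <= e * enorm h.

Definition has_jacobian (n m : nat) (c : 'cV[R]_n -> 'cV[R]_m)
    (J : 'cV[R]_n -> 'M[R]_(m, n)) : Prop :=
  forall x (e : R), 0 < e -> exists d : R, 0 < d /\
    forall h, enorm h < d -> enorm (c (x + h) - c x - J x *m h) <= e * enorm h.

Definition cont_fun (n p q : nat) (F : 'cV[R]_n -> 'M[R]_(p, q)) : Prop :=
  forall x (e : R), 0 < e -> exists d : R, 0 < d /\
    forall z, enorm (z - x) < d -> enorm (F z - F x) < e.

(* smallest singular value of an m x n matrix A with m <= n:
   sigma_min(A) = min_{|w| = 1} |A^T w|. *)
Definition sigma_min (m n : nat) (A : 'M[R]_(m, n)) : R :=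
  inf [set t : R | exists w : 'cV[R]_m, enorm w = 1 /\ t = enorm (A^T *m w)].

Definition Phi (n m : nat) (f r : 'cV[R]_n -> R) (c : 'cV[R]_n -> 'cV[R]_m)
    (tau : R) (z : 'cV[R]_n) : R :=
  tau * (f z + r z) + enorm (c z).

(* One iteration k of the algorithm (steps 1-4).
   tau_m1 is tau_{-1}; constants kv, sc = sigma_c, et = epsilon_tau, xi, eta,
   su = sigma_u.  gr k = g_{r,k}, y k = y_k. *)
Definition alg_step (n m : nat) (f r : 'cV[R]_n -> R) (c : 'cV[R]_n -> 'cV[R]_m)
    (g : 'cV[R]_n -> 'cV[R]_n) (J : 'cV[R]_n -> 'M[R]_(m, n))
    (kv sc et xi eta su tau_m1 : R)
    (x v u s gr : nat -> 'cV[R]_n) (alpha tau : nat -> R) (y : nat -> 'cV[R]_m)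
    (k : nat) : Prop :=
  let xk := x k in
  let ck := c xk in
  let gk := g xk in
  let Jk := J xk in
  let ak := alpha k in
  let Jc := Jk^T *m ck in
  let sbar := su + 2^-1 in
  let taup := if k is k'.+1 then tau k' else tau_m1 in
  [/\
    (Jc != 0 ->
      [/\ exists w : 'cV[R]_m, v k = Jk^T *m w,
          enorm (v k) <= kv * ak * enorm Jc &
          exists bc : R,
            [/\ 0 <= bc, bc <= kv * ak,
                (forall b : R, 0 <= b -> b <= kv * ak ->
                   2^-1 * enorm (ck - bc *: (Jk *m Jc)) ^+ 2
                   <= 2^-1 * enorm (ck - b *: (Jk *m Jc)) ^+ 2) &
                enorm (ck + Jk *m v k) <= enorm (ck + Jk *m (- (bc *: Jc)))]]),
    (Jc = 0 -> v k = 0),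
    [/\ Jk *m u k = 0,
        (forall w, Jk *m w = 0 ->
           dotv gk (u k) + (2 * ak)^-1 * enorm (u k) ^+ 2 + r (xk + v k + u k)
           <= dotv gk w + (2 * ak)^-1 * enorm w ^+ 2 + r (xk + v k + w)),
        s k = v k + u k,
        subgrad r (xk + s k) (gr k) &
        gk + ak^-1 *: u k + gr k - Jk^T *m y k = 0],
    (let D := dotv gk (s k) + sbar * enorm (s k) ^+ 2 / ak + r (xk + s k) - r xk in
     tau k = if D <= 0 then taup
             else let ttrial := (1 - sc) * (enorm ck - enorm (ck + Jk *m v k)) / D in
                  if taup <= ttrial then taup
                  else Num.min ((1 - et) * taup) ttrial) &
    (let dq := - tau k * (dotv gk (s k) + (2 * ak)^-1 * enorm (s k) ^+ 2
                          + r (xk + s k) - r xk)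
               + enorm ck - enorm (ck + Jk *m s k) in
     if Phi f r c (tau k) (xk + s k) <= Phi f r c (tau k) xk - eta * dq
     then x k.+1 = xk + s k /\ alpha k.+1 = ak
     else x k.+1 = xk /\ alpha k.+1 = xi * ak)].

Definition alg_run (n m : nat) (f r : 'cV[R]_n -> R) (c : 'cV[R]_n -> 'cV[R]_m)
    (g : 'cV[R]_n -> 'cV[R]_n) (J : 'cV[R]_n -> 'M[R]_(m, n))
    (kv sc et xi eta su tau_m1 : R)
    (x v u s gr : nat -> 'cV[R]_n) (alpha tau : nat -> R) (y : nat -> 'cV[R]_m)
    : Prop :=
  [/\ [/\ 0 < kv, 0 < sc < 1, 0 < et < 1, 0 < xi < 1 & 0 < eta < 1],
      0 < su <= 2^-1,
      0 < alpha 0, 0 < tau_m1 &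
      forall k, alg_step f r c g J kv sc et xi eta su tau_m1 x v u s gr alpha tau y k].

(* The algorithm never terminates: in step 1 never (J_k^T c_k = 0 and c_k <> 0),
   and in step 2 never s_k = 0. *)
Definition no_termination (n m : nat) (c : 'cV[R]_n -> 'cV[R]_m)
    (J : 'cV[R]_n -> 'M[R]_(m, n)) (x s : nat -> 'cV[R]_n) : Prop :=
  forall k, ((J (x k))^T *m c (x k) = 0 -> c (x k) = 0) /\ s k != 0.

Definition standing_assumption (n m : nat) (f r : 'cV[R]_n -> R)
    (c : 'cV[R]_n -> 'cV[R]_m) (g : 'cV[R]_n -> 'cV[R]_n)
    (J : 'cV[R]_n -> 'M[R]_(m, n)) (X : 'cV[R]_n -> Prop)
    (x s : nat -> 'cV[R]_n) : Prop :=
  [/\ [/\ open_set X, convex_set X &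
      (forall k, X (x k) /\ X (x k + s k))],
      (exists L : R, forall z, X z -> L <= f z),
      [/\ (exists M : R, forall z, X z -> enorm (g z) <= M) &
      (exists L : R, forall z w, X z -> X w -> enorm (g z - g w) <= L * enorm (z - w))],
      (exists M : R, forall z, X z -> enorm (c z) <= M) &
     [/\
      (* ||J(z)||_2 <= M, written out as an operator-norm bound *)
      (exists M : R, forall z (h : 'cV[R]_n), X z -> enorm (J z *m h) <= M * enorm h),
      (* ||J(z) - J(w)||_2 <= L ||z - w|| *)
      (exists L : R, forall z w (h : 'cV[R]_n), X z -> X w ->
          enorm ((J z - J w) *m h) <= L * enorm (z - w) * enorm h) &
      (exists M : R, forall z gr, X z -> subgrad r z gr -> enorm gr <= M)]].

End Defs.

(* Main.v *)
Require Import Defs.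
From HB Require Import structures.
From mathcomp Require Import all_boot all_order all_algebra.
From mathcomp Require Import all_classical all_reals.
From mathcomp Require Import ring lra.
Import Order.TTheory GRing.Theory Num.Theory.
Local Open Scope ring_scope.
Set Implicit Arguments. Unset Strict Implicit.

Section H.
Variable R : realType.
Variable n : nat.
Implicit Types u w : 'cV[R]_n.

Lemma sqr_ge0_aux (a : R) : 0 <= a * a.
Proof. by rewrite -expr2 sqr_ge0. Qed.

Definition S u w := \sum_i u i 0 * w i 0.

Lemma dotvE u w : dotv u w = S u w.
Proof. rewrite /dotv !mxE; apply: eq_bigr => i _; by rewrite mxE. Qed.

Lemma S_ge0 u : 0 <= S u u.
Proof. apply: sumr_ge0 => i _; rewrite -expr2; exact: sqr_ge0. Qed.

Lemma enormE u : enorm u = Num.sqrt (S u u).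
Proof. rewrite /enorm; congr Num.sqrt; apply: eq_bigr => i _; by rewrite big_ord1 expr2. Qed.

Lemma enorm_ge0 p q (A : 'M[R]_(p, q)) : 0 <= enorm A.
Proof. exact: sqrtr_ge0. Qed.
Arguments enorm_ge0 {p q}.

Lemma enorm_sq u : enorm u ^+ 2 = S u u.
Proof. by rewrite enormE sqr_sqrtr // S_ge0. Qed.

Lemma S_eq0 u : S u u = 0 -> forall w, S u w = 0.
Proof.
move=> /psumr_eq0P H w; apply: big1 => i _.
have := H (fun j _ => sqr_ge0_aux (u j 0)) i isT.
by move/eqP; rewrite mulf_eq0 orbb => /eqP ->; rewrite mul0r.
Qed.
Lemma S_sym u w : S u w = S w u.
Proof. by apply: eq_bigr => i _; rewrite mulrC. Qed.

Lemma S_comb (a b : R) u w (z : 'cV[R]_n) :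
  S (a *: u + b *: w) z = a * S u z + b * S w z.
Proof.
rewrite /S !mulr_sumr -big_split /=; apply: eq_bigr => i _; rewrite !mxE; ring.
Qed.

Lemma S_quad (a b : R) u w :
  S (a *: u + b *: w) (a *: u + b *: w) = a^+2 * S u u + 2 * a * b * S u w + b^+2 * S w w.
Proof.
rewrite /S !mulr_sumr -!big_split /=; apply: eq_bigr => i _; rewrite !mxE; ring.
Qed.

Lemma CS u w : `|S u w| <= enorm u * enorm w.
Proof.
set a := enorm u; set b := enorm w.
have hA : S u u = a ^+ 2 by rewrite enorm_sq.
have hB : S w w = b ^+ 2 by rewrite enorm_sq.
have a0 : 0 <= a by apply: enorm_ge0.
have b0 : 0 <= b by apply: enorm_ge0.
have [a0'|az] := eqVneq a 0.
  by rewrite (@S_eq0 u) ?normr0 ?a0' ?mul0r // hA a0' expr2 mul0r.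
have [b0'|bz] := eqVneq b 0.
  by rewrite S_sym (@S_eq0 w) ?normr0 ?b0' ?mulr0 // hB b0' expr2 mul0r.
have ab : 0 < a * b by rewrite mulr_gt0 // lt_def ?az ?bz.
have h1 := S_ge0 (b *: u + (- a) *: w).
have h2 := S_ge0 (b *: u + a *: w).
rewrite S_quad hA hB in h1; rewrite S_quad hA hB in h2.
rewrite ler_norml; apply/andP; split.
  have : 0 <= (a * b) * (a * b + S u w) by nra.
  rewrite pmulr_rge0 //; lra.
have : 0 <= (a * b) * (a * b - S u w) by nra.
rewrite pmulr_rge0 //; lra.
Qed.

Lemma enorm_add u w : enorm (u + w) <= enorm u + enorm w.
Proof.
have h := CS u w; have := ler_norm (S u w) => h'.
rewrite enormE -(ger0_norm (addr_ge0 (enorm_ge0 u) (enorm_ge0 w))) -sqrtr_sqr.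
apply: ler_wsqrtr.
have -> : u + w = 1 *: u + 1 *: w by rewrite !scale1r.
rewrite S_quad -(enorm_sq u) -(enorm_sq w); nra.
Qed.

Lemma enorm_scale (a : R) u : enorm (a *: u) = `|a| * enorm u.
Proof.
have -> : a *: u = a *: u + 0 *: u by rewrite scale0r addr0.
rewrite enormE S_quad.
have -> : a ^+ 2 * S u u + 2 * a * 0 * S u u + 0 ^+ 2 * S u u = a ^+ 2 * S u u by ring.
by rewrite sqrtrM ?sqr_ge0 // sqrtr_sqr enormE.
Qed.
End H.

Theorem lemma3p17 (R : realType) (n m : nat)
    (f r : 'cV[R]_n -> R) (c : 'cV[R]_n -> 'cV[R]_m)
    (g : 'cV[R]_n -> 'cV[R]_n) (J : 'cV[R]_n -> 'M[R]_(m, n))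
    (kv sc et xi eta su tau_m1 : R)
    (x v u s gr : nat -> 'cV[R]_n) (alpha tau : nat -> R) (y : nat -> 'cV[R]_m)
    (X : 'cV[R]_n -> Prop) (smin : R) :
  (m <= n)%N ->
  has_gradient f g -> cont_fun g ->
  has_jacobian c J -> cont_fun J ->
  convex_fun r -> (forall z, 0 <= r z) ->
  standing_assumption f r c g J X x s ->
  alg_run f r c g J kv sc et xi eta su tau_m1 x v u s gr alpha tau y ->
  no_termination c J x s ->
  0 < smin -> (forall k, smin <= sigma_min (J (x k))) ->
  exists M : R, forall k, enorm (y k) <= M.
Proof.
move=> _ _ _ _ _ _ _ SA RUN _ smin0 Hsig.
case: SA => [[_ _ HX] _ [[Mg HMg] _] _ [_ _ [Mr HMr]]].
case: RUN => _ _ _ _ Hstep.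
have Mg0 : 0 <= Mg by apply: le_trans (HMg _ (proj1 (HX 0%N))); apply: enorm_ge0.
have Mr0 : 0 <= Mr.
  have := Hstep 0%N; rewrite /alg_step; case => _ _ [_ _ _ Hsub _] _ _.
  by apply: le_trans (HMr _ _ (proj2 (HX 0%N)) Hsub); apply: enorm_ge0.
exists (2 * (Mg + Mr) / smin) => k.
have := Hstep k; rewrite /alg_step; case => _ _ [Ju _ _ Hsub Hkkt] _ _.
have hG : enorm (g (x k)) <= Mg := HMg _ (proj1 (HX k)).
have hGr : enorm (gr k) <= Mr := HMr _ _ (proj2 (HX k)) Hsub.
move: Ju Hkkt hG hGr.
set G := g (x k); set Gr := gr k; set U := u k; set A := alpha k; set Y := y k;
  set Jk := J (x k).
move=> Ju Hkkt hG hGr.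
have eq : Jk^T *m Y = 1 *: (G + Gr) + A^-1 *: U.
  rewrite scale1r; apply/esym/subr0_eq; rewrite -Hkkt; congr (_ - _).
  by rewrite addrAC.
have dot0 : S (Jk^T *m Y) U = 0.
  by rewrite -dotvE /dotv trmx_mul trmxK -mulmxA Ju mulmx0 mxE.
rewrite eq S_comb mul1r in dot0.
set H := G + Gr.
have hH : enorm H <= Mg + Mr by apply: le_trans (enorm_add _ _) _; apply: lerD.
have key : `|A^-1| * enorm U ^+ 2 <= enorm H * enorm U.
  rewrite enorm_sq -(ger0_norm (S_ge0 U)) -normrM.
  have -> : A^-1 * S U U = - S H U by apply/eqP; rewrite -addr_eq0 addrC dot0.
  by rewrite normrN; apply: CS.
have hz : enorm (A^-1 *: U) <= enorm H.
  rewrite enorm_scale.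
  have [U0|Unz] := eqVneq (enorm U) 0.
    by rewrite U0 mulr0; apply: enorm_ge0.
  have Upos : 0 < enorm U by rewrite lt_def Unz enorm_ge0.
  by rewrite -(ler_pM2r Upos) -mulrA -expr2.
have hT : enorm (Jk^T *m Y) <= 2 * (Mg + Mr).
  rewrite eq scale1r; apply: le_trans (enorm_add _ _) _; lra.
have [Y0|Ynz] := eqVneq (enorm Y) 0.
  rewrite Y0; apply: divr_ge0; lra.
have Ypos : 0 < enorm Y by rewrite lt_def Ynz enorm_ge0.
set w := (enorm Y)^-1 *: Y.
have w1 : enorm w = 1 by rewrite enorm_scale ger0_norm ?invr_ge0 ?enorm_ge0 // mulVf.
have hs : sigma_min Jk <= enorm (Jk^T *m w).
  apply: ge_inf; first by exists 0 => t [z [_ ->]]; apply: enorm_ge0.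
  by exists w.
have := le_trans (Hsig k) hs.
rewrite /w -scalemxAr enorm_scale ger0_norm ?invr_ge0 ?enorm_ge0 // => h.
rewrite ler_pdivlMr //.
have : smin * enorm Y <= enorm (Jk^T *m Y).
  have := ler_wpM2r (ltW Ypos) h.
  by rewrite mulrAC mulVf // mul1r.
lra.
Qed.
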